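(* Let $C'$ be an odd-like binary Euclidean LCD $[n,k,d]$ code. Then there exist a binary Euclidean LCD $[n-1,k-1,d']$ code $C$ with $d'\ge d$, a generator matrix $G$ of $C$, and a vector $\mathbf{x}\in C^{\perp_E}$ of even Hamming weight, such that $C'$ is equivalent to the binary code with generator matrix $\begin{pmatrix}1&\mathbf{x}\\ \mathbf{0}&G\end{pmatrix}$.
   Context: A binary $[n,k,d]$ code is a $k$-dimensional subspace of $\mathbb{F}_2^n$ with minimum nonzero Hamming weight $d$. $C^{\perp_E}$ is the dual with respect to $\langle x,y\rangle_E=\sum x_iy_i$; $C$ is LCD if $C\cap C^{\perp_E}=\{0\}$. A vector $x\in\mathbb{F}_2^n$ is even-like if $\sum x_i=0$ and odd-like otherwise; a binary code is even-like if all its codewords are even-like, and odd-like otherwise. Two codes are equivalent if one is obtained from the other by a monomial transformation (for binary codes, a coordinate permutation). $\mathbf{0}$ denotes a zero column. *)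

(* Defs.v *)
From HB Require Import structures.
From mathcomp Require Import all_boot all_order all_algebra all_fingroup.
Set Implicit Arguments. Unset Strict Implicit. Unset Printing Implicit Defensive.
Import GRing.Theory.
Local Open Scope ring_scope.

(* Binary linear codes of length n are represented as row spaces of matrices
   over 'F_2: a matrix A : 'M['F_2]_(m, n) represents the code (A)%MS,
   i.e. the span of its rows. *)
Notation F2 := 'F_2.

Definition in_code m n (A : 'M[F2]_(m, n)) (x : 'rV[F2]_n) : bool := (x <= A)%MS.

Definition wt n (x : 'rV[F2]_n) : nat := #|[set i : 'I_n | x 0 i != 0]|.

Definition edual m n (A : 'M[F2]_(m, n)) : 'M[F2]_n := kermx A^T.

Definition is_LCD m n (A : 'M[F2]_(m, n)) : bool := (A :&: edual A)%MS == 0.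

Definition cdim m n (A : 'M[F2]_(m, n)) : nat := \rank A.

Definition is_mindist m n (A : 'M[F2]_(m, n)) (d : nat) : Prop :=
  (exists x, [/\ in_code A x, x != 0 & wt x = d]) /\
  (forall x, in_code A x -> x != 0 -> (d <= wt x)%N).

Definition even_like_vec n (x : 'rV[F2]_n) : bool := \sum_i x 0 i == 0.
Definition odd_like m n (A : 'M[F2]_(m, n)) : Prop :=
  exists x, in_code A x /\ ~~ even_like_vec x.

Definition gen_matrix k m n (G : 'M[F2]_(k, n)) (A : 'M[F2]_(m, n)) : bool :=
  row_free G && (G == A)%MS.

Definition code_equiv m1 m2 n (A : 'M[F2]_(m1, n)) (B : 'M[F2]_(m2, n)) : Prop :=
  exists s : 'S_n, (col_perm s A == B)%MS.

(* Main.v *)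
Require Import Defs.
From HB Require Import structures.
From mathcomp Require Import all_boot all_order all_algebra all_fingroup.
Import GRing.Theory.
Local Open Scope ring_scope.

Lemma f2cases (a : 'F_2) : a = 0 \/ a = 1.
Proof. case: a => [[|[|//]]] H; [left|right]; exact/val_inj. Qed.
Lemma f2mul (a : 'F_2) : a * a = a.
Proof. by case: (f2cases a) => ->; rewrite ?mulr0 ?mulr1. Qed.
Lemma f2nat n : (n%:R : 'F_2) = (odd n)%:R.
Proof. elim: n => // n IH; rewrite -[n.+1]addn1 natrD IH oddD /=. by case: (odd n); apply/val_inj. Qed.
Lemma f2b (a : 'F_2) : a = (a != 0)%:R.
Proof. by case: (f2cases a) => ->; apply/val_inj. Qed.

Lemma wtE n (x : 'rV['F_2]_n) : wt x = \sum_j (x 0 j != 0 : nat).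
Proof.
rewrite /wt -sum1_card big_mkcond /=; apply: eq_bigr => j _; rewrite inE.
by case: (_ != 0).
Qed.

Lemma sum_wt n (x : 'rV['F_2]_n) : \sum_j x 0 j = (wt x)%:R.
Proof. by rewrite wtE natr_sum; apply: eq_bigr => j _; rewrite -f2b. Qed.

Lemma lshift0 n1 : lshift n1 (0 : 'I_1) = 0 :> 'I_(1 + n1).
Proof. exact/val_inj. Qed.

Lemma lshift0E n1 : (0 : 'I_(1 + n1)) = lshift n1 (0 : 'I_1).
Proof. exact/val_inj. Qed.

Lemma row0mx00 n1 (y : 'rV['F_2]_n1) : (row_mx (0 : 'rV_1) y) 0 (0 : 'I_(1 + n1)) = 0.
Proof. by rewrite (lshift0E n1) row_mxEl mxE. Qed.

Lemma wt_row0 n1 (y : 'rV['F_2]_n1) : wt (row_mx (0 : 'rV_1) y) = wt y.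
Proof.
rewrite !wtE big_split_ord /= big_ord1 row_mxEl mxE eqxx /=.
by apply: eq_bigr => j _; rewrite row_mxEr.
Qed.

Lemma wt_colperm n (s : 'S_n) (x : 'rV['F_2]_n) : wt (col_perm s x) = wt x.
Proof.
rewrite /wt -(card_preimset [set i | x 0 i != 0] (@perm_inj _ s)).
by apply: eq_card => j; rewrite !inE mxE.
Qed.

Lemma mulmx_col (R : pzSemiRingType) p q r (X : 'M[R]_(p, q)) (Y : 'M_(q, r)) j :
  X *m col j Y = col j (X *m Y).
Proof. by apply/matrixP => a b; rewrite !mxE; apply: eq_bigr => l _; rewrite !mxE. Qed.

Lemma orth_sub m1 m2 p n (z : 'M['F_2]_(p, n)) (X : 'M_(m1, n)) (Y : 'M_(m2, n)) :
  (X <= Y)%MS -> z *m Y^T = 0 -> z *m X^T = 0.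
Proof. by move=> /submxP [W ->] H; rewrite trmx_mul mulmxA H mul0mx. Qed.

Lemma lcd_inj m n (A : 'M['F_2]_(m, n)) : is_LCD A ->
  forall p (z : 'M_(p, n)), (z <= A)%MS -> z *m A^T = 0 -> z = 0.
Proof.
move=> /eqP L p z zA zo; apply/eqP; rewrite -submx0 -L sub_capmx zA /edual.
by rewrite sub_kermx zo eqxx.
Qed.

Definition Rm n1 : 'M['F_2]_(n1, 1 + n1) := row_mx 0 1%:M.

Lemma RRt n1 : Rm n1 *m (Rm n1)^T = 1%:M.
Proof. by rewrite /Rm tr_row_mx mul_row_col trmx0 trmx1 mulmx0 mulmx1 add0r. Qed.

Lemma RmE p n1 (y : 'M['F_2]_(p, n1)) : y *m Rm n1 = row_mx 0 y.
Proof. by rewrite /Rm mul_mx_row mulmx0 mulmx1. Qed.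

Lemma colE0 p n1 (X : 'M['F_2]_(p, 1 + n1)) : col 0 X = 0 -> X = rsubmx X *m Rm n1.
Proof.
move=> H; rewrite RmE -{1}(hsubmxK X); congr row_mx.
apply/matrixP => r j; rewrite ord1 !mxE lshift0.
by move/matrixP: H => /(_ r 0); rewrite !mxE.
Qed.

Lemma struct n1 m d (A : 'M['F_2]_(m, 1 + n1)) (u : 'rV_(1 + n1)) :
 (forall z : 'rV_(1 + n1), (z <= A)%MS -> z *m A^T = 0 -> z = 0) ->
 (forall z : 'rV_(1 + n1), (z <= A)%MS -> z != 0 -> (d <= wt z)%N) ->
 (u <= A)%MS -> u 0 0 = 1 ->
 (forall p (X : 'M_(p, 1 + n1)), (X <= A)%MS -> X *m u^T = col 0 X) ->
 exists k1, \rank A = k1.+1 /\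
 exists (C : 'M['F_2]_n1) (G : 'M['F_2]_(k1, n1)) (x : 'rV['F_2]_n1),
    [/\ is_LCD C, cdim C = k1,
        (forall y, in_code C y -> y != 0 -> (d <= wt y)%N) &
        gen_matrix G C] /\
    [/\ in_code (edual C) x, ~~ odd (wt x) &
        (A == block_mx (1 : 'M['F_2]_1) x 0 G)%MS].
Proof.
move=> H1 H2 uA u00 H3.
pose D := A - col 0 A *m u.
have AE : A = D + col 0 A *m u by rewrite /D subrK.
have cuA : (col 0 A *m u <= A)%MS by apply: submx_trans (submxMl _ _) uA.
have DA : (D <= A)%MS by rewrite /D addmx_sub // eqmx_opp.
have D0 : col 0 D = 0.
  apply/matrixP => r j; rewrite ord1 !mxE big_ord1 !mxE u00 mulr1 subrr.
  done.
pose E := rsubmx D.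
have DE : D = E *m Rm n1 := @colE0 _ _ _ D0.
pose k1 := \rank E.
pose G := row_base E.
pose C := (<<E>>)%MS.
pose x := rsubmx u.
have ux : u = row_mx 1%:M x.
  rewrite -{1}(hsubmxK u); congr row_mx.
  by apply/matrixP => i j; rewrite !ord1 !mxE lshift0 u00.
have xR : x = u *m (Rm n1)^T.
  by rewrite ux /Rm tr_row_mx mul_row_col trmx0 trmx1 mulmx0 mulmx1 add0r.
have Du : D *m u^T = 0 by rewrite H3 // D0.
have EG : (E <= G)%MS by rewrite /G eq_row_base submx_refl.
have GE : (G <= E)%MS by rewrite /G eq_row_base submx_refl.
have GR : row_mx 0 G = G *m Rm n1 by rewrite RmE.
have eqAB : (A == block_mx (1 : 'M['F_2]_1) x 0 G)%MS.
  rewrite block_mxEv; apply/andP; split.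
    rewrite -addsmxE {1}AE; apply: addmx_sub.
      by rewrite DE; apply: submx_trans (addsmxSr _ _); rewrite GR submxMr.
    by apply: submx_trans (submxMl _ _) _; rewrite -ux addsmxSl.
  by rewrite col_mx_sub -ux uA /= GR; apply: submx_trans DA; rewrite DE submxMr.
have rfB : row_free (block_mx (1 : 'M['F_2]_1) x 0 G).
  apply/inj_row_free => w; rewrite -(hsubmxK w) mul_row_block.
  rewrite -row_mx0 => /eq_row_mx [h1 h2]; rewrite mulmx1 mulmx0 addr0 in h1.
  rewrite h1 mul0mx add0r in h2.
  have h3 : rsubmx w = 0.
    by apply: (row_free_inj (row_base_free E)); rewrite mul0mx.
  by rewrite h1 h3 row_mx0.
have Ecore : forall y : 'rV_n1, (y <= E)%MS -> y *m E^T = 0 -> y = 0.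
  move=> y yE yo.
  have zA : (y *m Rm n1 <= A)%MS by apply: submx_trans DA; rewrite DE submxMr.
  have z0 : col 0 (y *m Rm n1) = 0.
    apply/matrixP => i j; rewrite RmE ord1 mxE [RHS]mxE; exact: row0mx00.
  have zo : y *m Rm n1 *m A^T = 0.
    rewrite {1}AE linearD /= mulmxDr trmx_mul mulmxA H3 // z0 mul0mx addr0.
    by rewrite DE trmx_mul !mulmxA -(mulmxA y) RRt mulmx1 yo.
  have := H1 _ zA zo => zz.
  by rewrite -[y]mulmx1 -(RRt n1) mulmxA zz mul0mx.
exists k1; split.
  by rewrite (eqmx_rank eqAB) (eqP rfB).
exists C, G, x; split; split.
- apply/eqP/row_matrixP => r; rewrite row0.
  set y := row r _.
  have yC : (y <= C)%MS by apply: submx_trans (row_sub _ _) (capmxSl _ _).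
  have yo : y *m C^T = 0.
    by apply/eqP; rewrite -sub_kermx; apply: submx_trans (row_sub _ _) (capmxSr _ _).
  apply: Ecore; first by rewrite -(genmxE E).
  by apply: orth_sub yo; rewrite genmxE.
- by rewrite /cdim mxrank_gen.
- move=> y yC y0.
  have yE : (y <= E)%MS by rewrite -(genmxE E).
  have zA : (y *m Rm n1 <= A)%MS by apply: submx_trans DA; rewrite DE submxMr.
  have zn : y *m Rm n1 != 0.
    apply: contra y0 => /eqP zz.
    by rewrite -[y]mulmx1 -(RRt n1) mulmxA zz mul0mx.
  by have := H2 _ zA zn; rewrite RmE wt_row0.
- rewrite /gen_matrix row_base_free /=; apply/eqmxP.
  exact: (eqmx_trans (eq_row_base E) (eqmx_sym (genmxE E))).
- rewrite /in_code /edual sub_kermx; apply/eqP.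
  apply: (@orth_sub _ _ _ _ _ _ E); first by rewrite genmxE.
  by rewrite xR -mulmxA -trmx_mul -DE -[u]trmxK -trmx_mul Du trmx0.
- have h := H3 _ _ uA.
  move/matrixP: h => /(_ 0 0); rewrite !mxE u00.
  rewrite (eq_bigr (fun j => u 0 j)); last by move=> j _; rewrite mxE f2mul.
  rewrite big_split_ord /= big_ord1 lshift0 u00 => h.
  have hx : \sum_j x 0 j = 0.
    apply: (addrI 1); rewrite addr0 -[in RHS]h; apply: congr1; apply: eq_bigr => j _.
    by rewrite mxE.
  move: hx; rewrite sum_wt f2nat; by case: (odd (wt x)).
- exact: eqAB.
Qed.

Theorem theorem3p6 (n k d m : nat) (C' : 'M['F_2]_(m, n)) :
  is_LCD C' -> odd_like C' -> cdim C' = k -> is_mindist C' d ->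
  exists (n1 k1 : nat) (en : n = n1.+1), k = k1.+1 /\
  exists (C : 'M['F_2]_n1) (G : 'M['F_2]_(k1, n1)) (x : 'rV['F_2]_n1),
    [/\ is_LCD C, cdim C = k1,
        (forall y, in_code C y -> y != 0 -> (d <= wt y)%N) &
        gen_matrix G C] /\
    [/\ in_code (edual C) x, ~~ odd (wt x) &
        code_equiv (castmx (erefl m, en) C')
                   (block_mx (1 : 'M['F_2]_1) x 0 G)].
Proof.
case: n C' => [|n1] A lcd [x [xA xodd]] rk [_ md].
  by rewrite /even_like_vec big_ord0 eqxx in xodd.
have lcdH := @lcd_inj _ _ A lcd.
have [B [BA AB Bfree]] : exists B : 'M['F_2]_(\rank A, n1.+1),
    [/\ (B <= A)%MS, (A <= B)%MS & row_free B].
  by exists (row_base A); rewrite !eq_row_base submx_refl row_base_free.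
pose M := B *m B^T.
have Mu : M \in unitmx.
  rewrite -row_free_unit -kermx_eq0; apply/eqP/row_matrixP => r; rewrite row0.
  set w := row r _.
  have wM : w *m M = 0 by apply/eqP; rewrite -sub_kermx row_sub.
  have wB : w *m B = 0.
    apply: lcdH; first by apply: submx_trans (submxMl _ _) BA.
    by apply: (@orth_sub _ _ _ _ _ _ _ AB); rewrite -mulmxA.
  by apply: (row_free_inj Bfree); rewrite mul0mx.
pose P := B^T *m invmx M *m B.
have PT : P^T = P.
  by rewrite /P !trmx_mul trmxK trmx_inv /M trmx_mul trmxK mulmxA.
have PX : forall p (X : 'M_(p, n1.+1)), (X <= A)%MS -> X *m P = X.
  move=> p X XA; have /submxP [Y ->] := submx_trans XA AB.
  by rewrite /P !mulmxA -(mulmxA Y B) -/M -(mulmxA Y M) mulmxV // mulmx1.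
have PA : (P <= A)%MS by apply: submx_trans (submxMl _ _) BA.
have [i Pii] : exists i, P i i = 1.
  case: (pickP (fun i => P i i == 1)) => [i /eqP Pii | none]; first by exists i.
  have Pjj : forall j, P j j = 0.
    by move=> j; move: (none j); case: (f2cases (P j j)) => -> //; rewrite eqxx.
  have hP : forall j, \sum_l P j l = 0.
    move=> j; have := congr1 (fun M : 'M_(n1.+1) => M j j) (PX _ P PA).
    rewrite -{2}PT mxE Pjj => h; rewrite -[in RHS]h; apply: eq_bigr => l _.
    by rewrite [P^T l j]mxE f2mul.
  move: xodd; rewrite /even_like_vec -(PX _ x xA).
  under eq_bigr do rewrite mxE.
  rewrite exchange_big big1 ?eqxx // => j _.
  by rewrite -mulr_sumr hP mulr0.
pose s : 'S_n1.+1 := tperm 0 i.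
have cpK : forall p (X : 'M['F_2]_(p, n1.+1)), col_perm s (col_perm s X) = X.
  by move=> p X; apply/matrixP => r c; rewrite !mxE tpermK.
have cpE : forall p (X : 'M['F_2]_(p, n1.+1)), col_perm s X = X *m perm_mx s.
  by move=> p X; rewrite col_permE tpermV.
have cpS : forall p q (X : 'M['F_2]_(p, n1.+1)) (Y : 'M_(q, n1.+1)),
    (X <= Y)%MS -> (col_perm s X <= col_perm s Y)%MS.
  by move=> p q X Y XY; rewrite !cpE submxMr.
have cpdot : forall p q (X : 'M['F_2]_(p, n1.+1)) (Y : 'M_(q, n1.+1)),
    X *m (col_perm s Y)^T = col_perm s X *m Y^T.
  by move=> p q X Y; rewrite !cpE trmx_mul tr_perm_mx tpermV mulmxA.
have cpA : forall p (X : 'M['F_2]_(p, n1.+1)), (X <= col_perm s A)%MS -> (col_perm s X <= A)%MS.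
  by move=> p X XA; rewrite -[A]cpK cpS.
have H1 : forall z : 'rV_(1 + n1), (z <= col_perm s A)%MS -> z *m (col_perm s A)^T = 0 -> z = 0.
  move=> z zA zo.
  have : col_perm s z = 0 by apply: lcdH; [exact: cpA | rewrite -cpdot].
  by move=> h; rewrite -[z]cpK h cpE mul0mx.
have H2 : forall z : 'rV_(1 + n1), (z <= col_perm s A)%MS -> z != 0 -> (d <= wt z)%N.
  move=> z zA z0; rewrite -(@wt_colperm _ s z); apply: md; first exact: cpA.
  by apply: contra z0 => /eqP h; rewrite -[z]cpK h cpE mul0mx.
have uA : (col_perm s (row i P) <= col_perm s A)%MS.
  by apply: cpS; apply: submx_trans (row_sub _ _) PA.
have u00 : (col_perm s (row i P)) 0 0 = 1.
  by rewrite [LHS]mxE [row i P 0 _]mxE /s tpermL.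
have H3 : forall p (X : 'M_(p, 1 + n1)), (X <= col_perm s A)%MS ->
    X *m (col_perm s (row i P))^T = col 0 X.
  move=> p X XA; rewrite cpdot tr_row PT mulmx_col PX; last exact: cpA.
  by apply/matrixP => r c; rewrite !mxE tpermR.
have [k1 [rkA [C [G [x0 [[a b c e] [f g h]]]]]]] := @struct _ _ _ _ _ H1 H2 uA u00 H3.
exists n1, k1, (erefl n1.+1); split.
  by rewrite -rk /cdim -rkA cpE mxrankMfree // row_free_unit unitmx_perm.
exists C, G, x0; split; split => //.
by exists s; rewrite castmx_id.
Qed.
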